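(* Let $p$ be a prime, $q=p^l$, $m\ge1$, $n=2m$. For any $0\leqslant r<n(q-1)$ and $I\subseteq M_r$, the code $\mathcal{C}_q(r,I,n)$ is affine-invariant, i.e. for every $a\in\mathbb{F}_{q^n}^*$ and $b\in\mathbb{F}_{q^n}$, if $(c_g)_{g\in\mathbb{F}_{q^n}}\in\mathcal{C}_q(r,I,n)$ then the vector $(c'_g)_{g\in\mathbb{F}_{q^n}}$ with $c'_{ag+b}=c_g$ for all $g$ also lies in $\mathcal{C}_q(r,I,n)$.
   Context: Let $N=q^n-1$ and $\alpha$ a primitive element of $\mathbb{F}_{q^n}$. Every integer $0\le u\le q^n-1$ is written $u=\sum_{i=0}^{n-1}u_iq^i$, $u_i\in\{0,\dots,q-1\}$; $\mathrm{wt}_q(u)=\sum u_i$, $O(u)=\sum_{i\text{ odd}}u_i$, $E(u)=\sum_{i\text{ even}}u_i$. For $-1\le r<n(q-1)$, $Z_r=\{\alpha^u\mid 0<u\le q^n-1,\ \mathrm{wt}_q(u)\le n(q-1)-r-1\}$. For $0\le r\le n(q-1)$ and integer $k\ge0$, $\Theta^{(r)}_k=\{\alpha^u\mid 0\le u\le q^n-1,\ \mathrm{wt}_q(u)=n(q-1)-r,\ |O(u)-E(u)|=k\}$. $M_r$ is the set of even (resp. odd) integers $k\in[0,m(q-1)]$ when $r$ is even (resp. odd). For $I\subseteq M_r$, $\overline I=M_r\setminus I$ and $Z_{r,I}=Z_r\cup\bigcup_{k\in\overline I}\Theta^{(r)}_k$. A cyclic code of length $N$ over $\mathbb{F}_q$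 with zero set $Z$ is $\{(c_0,\dots,c_{N-1})\in\mathbb{F}_q^N\mid \sum_{i}c_i\beta^i=0\ \forall\beta\in Z\}$; coordinate $i$ is labelled by the field element $\alpha^i$. $\mathcal{C}_q(r,I,n)^*$ is the cyclic code with zero set $Z_{r,I}$, and $\mathcal{C}_q(r,I,n)$ is its extended code: its coordinates are indexed by $\mathbb{F}_{q^n}$, with $c_{\alpha^i}=c_i$ and the extra coordinate labelled $0\in\mathbb{F}_{q^n}$ equal to $-\sum_i c_i$. *)

(* Defs.v *)
From HB Require Import structures.
From mathcomp Require Import all_boot all_order all_algebra all_field.
Set Implicit Arguments. Unset Strict Implicit. Unset Printing Implicit Defensive.
Import Order.TTheory GRing.Theory Num.Theory.

Definition digit (q i u : nat) : nat := (u %/ q ^ i) %% q.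

Definition wtq (q n u : nat) : nat := \sum_(i < n) digit q i u.
Definition Osum (q n u : nat) : nat := \sum_(i < n | odd i) digit q i u.
Definition Esum (q n u : nat) : nat := \sum_(i < n | ~~ odd i) digit q i u.

Definition absdiff (a b : nat) : nat := (a - b) + (b - a).

Section Codes.
Variables (F K : finFieldType) (f : {rmorphism F -> K}).
Variables (q n : nat) (alpha : K).

Local Open Scope ring_scope.

Definition Zr (r : nat) (beta : K) : Prop :=
  exists u : nat, [/\ (0 < u)%N, (u <= q ^ n - 1)%N,
                      (wtq q n u + r + 1 <= n * (q - 1))%N & beta = alpha ^+ u].

Definition Theta (r k : nat) (beta : K) : Prop :=
  exists u : nat, [/\ (u <= q ^ n - 1)%N,
                      (wtq q n u + r = n * (q - 1))%N,
                      absdiff (Osum q n u) (Esum q n u) = k & beta = alpha ^+ u].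

Definition Mr (m r k : nat) : bool := (k <= m * (q - 1))%N && (odd k == odd r).

Definition ZrI (m r : nat) (I : pred nat) (beta : K) : Prop :=
  Zr r beta \/ exists k : nat, [/\ Mr m r k, ~~ I k & Theta r k beta].

(* cyclic code of length N = q^n - 1 over F with zero set Z;
   a word is c : nat -> F, with coordinates c 0, ..., c (N-1) *)
Definition in_cyclic_code (Z : K -> Prop) (c : nat -> F) : Prop :=
  forall beta, Z beta -> \sum_(i < q ^ n - 1) f (c i) * beta ^+ i = 0.

(* extended code: coordinates indexed by K, c_{alpha^i} = c_i, and the
   coordinate 0 equals - \sum_i c_i *)
Definition in_extended_code (Z : K -> Prop) (w : K -> F) : Prop :=
  in_cyclic_code Z (fun i => w (alpha ^+ i)) /\
  w 0 = - \sum_(i < q ^ n - 1) w (alpha ^+ i).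

Definition in_Cq (m r : nat) (I : pred nat) (w : K -> F) : Prop :=
  in_extended_code (ZrI m r I) w.

End Codes.

(* Main.v *)
Require Import Defs.
From HB Require Import structures.
From mathcomp Require Import all_boot all_order all_algebra all_field.
From mathcomp Require Import zify.
Import GRing.Theory.
Local Open Scope ring_scope.

Definition prec (q t u : nat) := forall i, (digit q i t <= digit q i u)%N.

Lemma digit0 q x : digit q 0 x = (x %% q)%N.
Proof. by rewrite /digit expn0 divn1. Qed.

Lemma digitS q i x : digit q i.+1 x = digit q i (x %/ q).
Proof. by rewrite /digit expnS divnMA. Qed.

Lemma digit_small q i x : (x < q)%N -> digit q i.+1 x = 0%N.
Proof. by move=> h; rewrite digitS divn_small // /digit div0n mod0n. Qed.

Lemma prec_small q t u : (t <= u < q)%N -> prec q t u.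
Proof.
move=> /andP[htu huq] [|i]; first by rewrite !digit0 !modn_small //; lia.
by rewrite digit_small //; lia.
Qed.

Lemma prec_comb q t0 t1 u0 u1 : (0 < q)%N -> (t0 <= u0 < q)%N -> prec q t1 u1 ->
  prec q (t0 + q * t1) (u0 + q * u1).
Proof.
move=> q0 /andP[h1 h2] hp [|i].
  rewrite !digit0 ![(_ + q * _)%N]addnC ![(q * _)%N]mulnC !modnMDl !modn_small //; lia.
rewrite !digitS ![(_ + q * _)%N]addnC ![(q * _)%N]mulnC !divnMDl // !divn_small ?addn0 //; lia.
Qed.

Lemma frobq (K : fieldType) p l (chK : p \in [pchar K]) (x y : K) :
  (x + y) ^+ (p ^ l) = x ^+ (p ^ l) + y ^+ (p ^ l).
Proof.
elim: l x y => [|l IH] x y; first by rewrite expn0 !expr1.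
rewrite expnS !exprM -!(pFrobenius_autE chK) pFrobenius_autD_comm ?IH //; by rewrite /GRing.comm mulrC.
Qed.

Definition spanq {K : comRingType} (q u : nat) (h : K -> K) :=
  exists L : seq (K * nat), (forall z, z \in L -> prec q z.2 u /\ (z.2 <= u)%N) /\
    forall g, h g = \sum_(z <- L) z.1 * g ^+ z.2.

Section Span.
Variables (K : fieldType) (q : nat) (a b : K).
Hypothesis hq : (1 < q)%N.
Hypothesis hfrob : forall x y : K, (x + y) ^+ q = x ^+ q + y ^+ q.

Lemma frob_sum (L : seq (K * nat)) g :
  (\sum_(z <- L) z.1 * g ^+ z.2) ^+ q = \sum_(z <- L) z.1 ^+ q * g ^+ (q * z.2).
Proof.
elim: L => [|z L IH]; first by rewrite !big_nil expr0n; case: q hq.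
by rewrite !big_cons hfrob IH exprMn -exprM mulnC.
Qed.

Lemma span_small u : (u < q)%N -> spanq q u (fun g => (a * g + b) ^+ u).
Proof.
move=> hu.
exists [seq (b ^+ (u - i) * a ^+ i *+ 'C(u, i), i) | i <- iota 0 u.+1]; split.
  move=> z /mapP [i]; rewrite mem_iota => /andP[_ hi] -> /=.
  split; last by lia.
  apply: prec_small; lia.
move=> g; rewrite addrC exprDn big_map.
rewrite -[iota 0 u.+1]/(index_iota 0 u.+1) big_mkord.
apply: eq_bigr => i _.
by rewrite exprMn /= mulrnAl mulrA.
Qed.

Lemma span_mul u0 u1 (h0 h1 h : K -> K) : (u0 < q)%N -> spanq q u0 h0 -> spanq q u1 h1 ->
  (forall g, h g = h0 g * (h1 g) ^+ q) -> spanq q (u0 + q * u1) h.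
Proof.
move=> hu0 [L0 [hL0 e0]] [L1 [hL1 e1]] eh.
exists [seq (z0.1 * z1.1 ^+ q, (z0.2 + q * z1.2)%N) | z0 <- L0, z1 <- L1]; split.
  move=> z /allpairsP [[z0 z1] [/= i0 i1 ->]] /=.
  have [p0 l0] := hL0 _ i0; have [p1 l1] := hL1 _ i1.
  split; last by apply: leq_add => //; apply: leq_mul.
  apply: prec_comb => //; first lia.
  by rewrite l0 hu0.
move=> g; rewrite eh e0 e1 frob_sum big_allpairs_dep /= mulr_suml.
apply: eq_bigr => z0 _; rewrite mulr_sumr; apply: eq_bigr => z1 _.
by rewrite exprD mulrACA.
Qed.

Lemma span_all k u : (u < q ^ k)%N -> spanq q u (fun g => (a * g + b) ^+ u).
Proof.
elim: k u => [|k IH] u hu.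
  have -> : u = 0%N by rewrite expn0 ltnS leqn0 in hu; apply/eqP.
  exists [:: (1, 0%N)]; split; first by move=> z; rewrite inE => /eqP -> ; split => // i.
  by move=> g; rewrite big_cons big_nil !expr0 mulr1 addr0.
have -> : u = (u %% q + q * (u %/ q))%N by rewrite addnC mulnC -divn_eq.
apply: span_mul.
- by rewrite ltn_mod ltnW.
- by apply: span_small; rewrite ltn_mod ltnW.
- by apply: IH; rewrite ltn_divLR ?(ltnW hq) // mulnC -expnS.
by move=> g; rewrite exprD [(q * _)%N]mulnC exprM.
Qed.
End Span.

Lemma sum_units (K : finFieldType) (V : nmodType) (N : nat) (alpha : K)
  (hN : N = #|K|.-1) (ha : N.-primitive_root alpha) (G : K -> V) :
  \sum_(i < N) G (alpha ^+ i) = \sum_(g | g != 0) G g.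
Proof.
have N0 : (0 < N)%N := prim_order_gt0 ha.
set s := [seq alpha ^+ i | i <- iota 0 N].
have us : uniq s.
  rewrite map_inj_in_uniq ?iota_uniq // => i j; rewrite !mem_iota /= => hi hj /eqP.
  rewrite add0n in hi hj; rewrite (eq_prim_root_expr ha) !modn_small //; by move/eqP.
have -> : \sum_(i < N) G (alpha ^+ i) = \sum_(x <- s) G x.
  by rewrite big_map (_ : iota 0 N = index_iota 0 N) ?big_mkord // /index_iota subn0.
rewrite big_uniq //; apply: eq_bigl => x.
have a0 : alpha != 0.
  apply/negP => /eqP a0; have := prim_expr_order ha; rewrite a0 expr0n.
  by case: N N0 {hN ha s us} => // N' _ /eqP; rewrite eq_sym oner_eq0.
have sub : [set x | x \in s] \subset [set~ 0].
  apply/subsetP => y; rewrite inE => /mapP [i _ ->]; rewrite in_setC1.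
  exact: expf_neq0.
have : [set x | x \in s] == [set~ 0].
  rewrite eqEcard sub cardsC1 /= -hN cardsE.
  by move/card_uniqP: us => ->; rewrite size_map size_iota.
by move/eqP/setP => /(_ x); rewrite inE in_setC1 => ->.
Qed.

Lemma digit_expand q n x : (0 < q)%N -> (x < q ^ n)%N ->
  x = (\sum_(i < n) digit q i x * q ^ i)%N.
Proof.
move=> q0; elim: n x => [|n IH] x hx.
  by rewrite big_ord0; rewrite expn0 in hx; lia.
rewrite big_ord_recl digit0 expn0 muln1.
have -> : (\sum_(i < n) digit q (bump 0 i) x * q ^ bump 0 i =
           q * \sum_(i < n) digit q i (x %/ q) * q ^ i)%N.
  rewrite big_distrr /=; apply: eq_bigr => i _.
  by rewrite /bump /= add1n digitS expnS mulnCA.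
rewrite -IH; first by rewrite addnC mulnC -divn_eq.
by rewrite ltn_divLR // -expnSr.
Qed.

Lemma wt_lt q n t u : (0 < q)%N -> prec q t u -> (u < q ^ n)%N -> (t <= u)%N -> t != u ->
  (wtq q n t < wtq q n u)%N.
Proof.
move=> q0 hp hu htu ntu.
have [i0 hi0] : exists i0 : 'I_n, digit q i0 t != digit q i0 u.
  apply/existsP; apply: contraR ntu; rewrite negb_exists => /forallP hall.
  rewrite (@digit_expand q n u q0 hu) (@digit_expand q n t q0 (leq_ltn_trans htu hu)).
  by apply/eqP; apply: eq_bigr => i _; move/negPn/eqP: (hall i) => ->.
rewrite /wtq (bigD1 i0) //= [X in (_ < X)%N](bigD1 i0) //=.
have h1 : (\sum_(i < n | i != i0) digit q i t <= \sum_(i < n | i != i0) digit q i u)%N.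
  by apply: leq_sum => i _; apply: hp.
have h2 : (digit q i0 t < digit q i0 u)%N by rewrite ltn_neqAle hi0 hp.
by rewrite -addSn; apply: leq_add.
Qed.

Theorem theorem3p11
  (p l m n q : nat) (F K : finFieldType) (f : {rmorphism F -> K}) (alpha : K)
  (hp : prime p) (hq : q = (p ^ l)%N) (hm : (1 <= m)%N) (hn : n = (2 * m)%N)
  (hF : #|F| = q) (hK : #|K| = (q ^ n)%N)
  (halpha : (q ^ n - 1)%N.-primitive_root alpha)
  (r : nat) (hr : (r < n * (q - 1))%N)
  (I : pred nat) (hI : forall k, I k -> Mr q m r k)
  (a b : K) (ha : a != 0)
  (c c' : K -> F) :
  in_Cq f q n alpha m r I c ->
  (forall g : K, c' (a * g + b) = c g) ->
  in_Cq f q n alpha m r I c'.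
Proof.
rewrite /in_Cq /in_extended_code /in_cyclic_code => -[hcyc hext] hc'.
set N := (q ^ n - 1)%N.
have hN : N = #|K|.-1 by rewrite hK /N subn1.
have q1 : (1 < q)%N.
  case: (ltnP 1 q) => // hq1; exfalso.
  have := card_finNzRing_gt1 K; rewrite hK.
  move: (q) (n) hq1 => x y; case: x => [|[|x]] //= _.
    by case: y => // y; rewrite exp0n.
  by rewrite exp1n.
have q0 : (0 < q)%N by lia.
have chK : p \in [pchar K] by apply: (card_finPcharP (n := (l * n)%N)) => //; rewrite hK hq expnM.
have hfrob : forall x y : K, (x + y) ^+ q = x ^+ q + y ^+ q by move=> x y; rewrite hq; apply: frobq.
pose S (d : K -> F) u := \sum_(g : K) f (d g) * g ^+ u.
have conv : forall (d : K -> F) u, (0 < u)%N ->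
    \sum_(i < N) f (d (alpha ^+ i)) * (alpha ^+ u) ^+ i = S d u.
  move=> d u u0; rewrite /S (bigD1 0) //= expr0n eqn0Ngt u0 /= mulr0 add0r.
  rewrite -(@sum_units K _ N alpha hN halpha (fun g => f (d g) * g ^+ u)).
  by apply: eq_bigr => i _; rewrite exprAC.
have sumc : \sum_(g : K) c g = 0.
  rewrite (bigD1 0) //= hext -(@sum_units K _ N alpha hN halpha (fun g => c g)).
  by rewrite addNr.
have sumc' : \sum_(g : K) c' g = 0.
  have inj : injective (fun g : K => a * g + b).
    by move=> x y /addIr /(mulfI ha).
  by rewrite (reindex_inj inj) /=; under eq_bigr do rewrite hc'.
have S0 : S c 0%N = 0.
  by rewrite /S; under eq_bigr do rewrite expr0 mulr1; rewrite -rmorph_sum sumc rmorph0.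
have S'aff : forall u, S c' u = \sum_(g : K) f (c g) * (a * g + b) ^+ u.
  have inj : injective (fun g : K => a * g + b).
    by move=> x y /addIr /(mulfI ha).
  by move=> u; rewrite /S (reindex_inj inj) /=; under eq_bigr do rewrite hc'.
split; last first.
  apply/eqP; rewrite -addr_eq0 (@sum_units K _ N alpha hN halpha (fun g => c' g)).
  by rewrite -(bigD1 0 (P := xpredT)) //= sumc'.
move=> beta hbeta.
have [u [u0 uN uw eb]] : exists u, [/\ (0 < u)%N, (u <= N)%N,
    (wtq q n u + r <= n * (q - 1))%N & beta = alpha ^+ u].
  case: hbeta => [[u [u0 uN uw ->]]|[k [_ _ [u [uN uw _ ->]]]]].
    by exists u; split => //; lia.
  exists u; split => //; last by lia.
  case: u uw {uN} => // uw; exfalso.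
  move: uw; rewrite /wtq big1 ?add0n => [h|i _]; first by lia.
  by rewrite /digit div0n mod0n.
subst beta; have hcu := hcyc _ hbeta.
rewrite conv // S'aff.
have uq : (u < q ^ n)%N.
  have qn0 : (0 < q ^ n)%N by rewrite expn_gt0 q0.
  move: uN; rewrite /N; lia.
have [L [hL eL]] := @span_all K q a b q1 hfrob n u uq.
under eq_bigr do rewrite eL mulr_sumr.
rewrite exchange_big /=; apply: big1_seq => z /andP[_ zL].
have [pz lz] := hL z zL.
have -> : \sum_(i : K) f (c i) * (z.1 * i ^+ z.2) = z.1 * S c z.2.
  by rewrite /S mulr_sumr; apply: eq_bigr => i _; rewrite mulrCA.
apply/eqP; rewrite mulf_eq0; apply/orP; right; apply/eqP.
have [->|t0] := posnP z.2; first exact: S0.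
have [->|ntu] := eqVneq z.2 u; first by rewrite -conv.
have hw := @wt_lt q n z.2 u q0 pz uq lz ntu.
rewrite -conv //; apply: hcyc; left; exists z.2; split => //; [exact: leq_trans lz uN | lia].
Qed.
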